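(* Consider the continuous Bomber Problem described in the context, with parameter $v\in(0,1]$. Let $x=x_t>0$ be defined for small $t>0$ and satisfy $$\frac{|\log t|}{x_t}\to\rho\in(0,\infty)\quad\text{as } t\to 0.$$ Let $j\in\{1,2,\ldots\}$ be such that $$\binom{j+1}{2}^{-1}\le\rho<\binom{j}{2}^{-1},$$ with the convention $\binom{1}{2}^{-1}=\infty$. Then, as $t\to 0$, $$\frac{K(x_t,t)}{x_t}\to \frac1j+\frac{\rho(j-1)}{2},\qquad \frac{1}{x_t}\left|\log\big(1-H(x_t,t)\big)\right|\to \frac1j+\frac{\rho(j-1)}{2},$$ $$\frac{1}{x_t}\left|\log\big(1-P(x_t,t)\big)\right|\to \frac1j+\frac{\rho(j+1)}{2}.$$
   Context: The Bomber Problem: a bomber holding an amount $x\ge 0$ of (continuously divisible) ammunition must survive for a remaining time $t\ge 0$. Enemies arrive according to a time-homogeneous Poisson process of rate 1. Upon meeting an enemy, the bomber chooses an amount $y\in[0,x]$ of its current ammunition to fire; the enemy survives this with probability $e^{-y}$, and if it survives it destroys the bomber with probability $v\in(0,1]$. Thus the bomber survives an encounter in which it spends $y$ with probability $a(y)=1-ve^{-y}$, and continues with ammunition $x-y$. $P(x,t)$ denotes the optimal probability that the bomber survives for time $t$ starting with ammunition $x$; $H(x,t)$ denotes the optimal conditional probability of survival given that an enemy is encountered at remaining time $t$ while holding ammunition $x$; and $K(x,t)\in[0,x]$ denotes the optimal amount of ammunition to fire at that enemy, so that $H(x,t)=a(K(x,t))P(x-K(x,t),t)$. *)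

(* Defs.v *)
From Stdlib Require Import Reals.
From Coquelicot Require Import Coquelicot.
Open Scope R_scope.

(* Probability of surviving an encounter in which amount y is fired. *)
Definition a (v y : R) : R := 1 - v * exp (- y).

Definition Hfun (v : R) (P K : R -> R -> R) (x t : R) : R :=
  a v (K x t) * P (x - K x t) t.

(* (P, K) is the solution of the continuous Bomber Problem with parameter v:
   - P takes values in [0,1] on the domain x >= 0, t >= 0;
   - K(x,t) in [0,x] is an optimal amount to fire at an enemy met at remaining
     time t holding ammunition x:  H(x,t) = max_{0<=y<=x} a(y) P(x-y,t);
   - P satisfies the dynamic-programming (optimality) equation for Poisson(1)
     enemy arrivals: conditioning on the time s of the first arrival,
       P(x,t) = e^{-t} + int_0^t e^{-s} H(x, t-s) ds.
   Among bounded functions this equation has a unique solution P, which is the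
   optimal survival probability. *)
Definition bomber_solution (v : R) (P K : R -> R -> R) : Prop :=
  (forall x t, 0 <= x -> 0 <= t -> 0 <= P x t <= 1) /\
  (forall x t, 0 <= x -> 0 <= t ->
     0 <= K x t <= x /\
     (forall y, 0 <= y <= x -> a v y * P (x - y) t <= Hfun v P K x t)) /\
  (forall x t, 0 <= x -> 0 <= t ->
     ex_RInt (fun s => exp (- s) * Hfun v P K x (t - s)) 0 t /\
     P x t = exp (- t) + RInt (fun s => exp (- s) * Hfun v P K x (t - s)) 0 t).

(* Main.v *)
Require Import Defs.
From Stdlib Require Import Reals Lra Lia.
From Coquelicot Require Import Coquelicot.
Open Scope R_scope.


Lemma expl : forall x y, x <= y -> exp x <= exp y.
Proof. intros x y H. destruct (Rle_lt_or_eq_dec _ _ H) as [H1|H1].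
  left; now apply exp_increasing. now subst; right. Qed.

Lemma expl_inv : forall x y, exp x <= exp y -> x <= y.
Proof. intros x y H. destruct (Rle_or_lt x y) as [|H1]; auto.
  apply exp_increasing in H1; lra. Qed.

Definition Qf (P : R -> R -> R) z w := 1 - P z w.
Definition Gf v P K z w := 1 - Hfun v P K z w.

Section S.
Lemma a_bounds : forall v y, 0 < v <= 1 -> 0 <= y -> 0 <= a v y <= 1.
Proof. intros v y Hv Hy. unfold a. split.
  - assert (exp (-y) <= 1). { rewrite <- exp_0. apply expl; lra. }
    assert (0 < exp (-y)) by apply exp_pos. nra.
  - assert (0 < exp (-y)) by apply exp_pos. nra. Qed.
End S.

Lemma Q_bounds v P K : bomber_solution v P K -> forall z w, 0 <= z -> 0 <= w -> 0 <= Qf P z w <= 1.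
Proof. intros [H1 _] z w Hz Hw. unfold Qf. specialize (H1 z w Hz Hw). lra. Qed.

Lemma K_bounds v P K : bomber_solution v P K -> forall z w, 0 <= z -> 0 <= w -> 0 <= K z w <= z.
Proof. intros [_ [H2 _]] z w Hz Hw. apply (H2 z w Hz Hw). Qed.

Lemma G_eq v P K z w : Gf v P K z w = v * exp (- K z w) + a v (K z w) * Qf P (z - K z w) w.
Proof. unfold Gf, Hfun, Qf, a. ring. Qed.

Lemma G_le v P K : 0 < v <= 1 -> bomber_solution v P K -> forall z w y, 0 <= z -> 0 <= w -> 0 <= y <= z ->
  Gf v P K z w <= v * exp (- y) + Qf P (z - y) w.
Proof. intros Hv Hs z w y Hz Hw Hy. destruct Hs as [H1 [H2 H3]] .
  destruct (H2 z w Hz Hw) as [_ Hmax]. specialize (Hmax y Hy).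
  assert (Hq : 0 <= Qf P (z-y) w <= 1) by (apply (Q_bounds v P K); [split;auto|lra|lra]).
  assert (Ha := a_bounds v y Hv (proj1 Hy)).
  unfold Gf. unfold Qf in Hq. replace (v * exp (-y)) with (1 - a v y) by (unfold a; ring).
  unfold Qf. nra. Qed.

Lemma G_ge_K v P K : 0 < v <= 1 -> bomber_solution v P K -> forall z w, 0 <= z -> 0 <= w ->
  v * exp (- K z w) <= Gf v P K z w /\ a v (K z w) * Qf P (z - K z w) w <= Gf v P K z w.
Proof. intros Hv Hs z w Hz Hw. rewrite G_eq.
  destruct (K_bounds v P K Hs z w Hz Hw) as [Hk1 Hk2].
  assert (Hq := Q_bounds v P K Hs (z - K z w) w ltac:(lra) Hw).
  assert (Ha := a_bounds v (K z w) Hv Hk1).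
  assert (0 < exp (- K z w)) by apply exp_pos. split; nra. Qed.

Lemma G_bounds v P K : 0 < v <= 1 -> bomber_solution v P K -> forall z w, 0 <= z -> 0 <= w ->
  0 <= Gf v P K z w <= 1.
Proof. intros Hv Hs z w Hz Hw. pose proof (G_ge_K v P K Hv Hs z w Hz Hw) as [A B].
  destruct (K_bounds v P K Hs z w Hz Hw) as [Hk1 Hk2].
  assert (Hq := Q_bounds v P K Hs (z - K z w) w ltac:(lra) Hw).
  assert (Ha := a_bounds v (K z w) Hv Hk1).
  assert (0 < exp (- K z w)) by apply exp_pos. split. nra.
  unfold Gf, Hfun. destruct Hs as [H1 _]. specialize (H1 (z - K z w) w ltac:(lra) Hw). nra. Qed.

Lemma exp_int w : 0 <= w -> is_RInt (fun s => exp (- s)) 0 w (1 - exp (- w)).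
Proof. intros Hw.
  replace (1 - exp (-w)) with (minus ((fun s => - exp (- s)) w) ((fun s => - exp (-s)) 0)).
  2:{ simpl. rewrite Ropp_0, exp_0. unfold minus, plus, opp; simpl. ring. }
  apply (is_RInt_derive (fun s => - exp (-s))).
  - intros x _. auto_derive; auto. ring.
  - intros x _. apply (ex_derive_continuous (fun s => exp (-s))). auto_derive. auto.
Qed.

Lemma Q_int v P K : bomber_solution v P K -> forall z w, 0 <= z -> 0 <= w ->
  ex_RInt (fun s => exp (- s) * Gf v P K z (w - s)) 0 w /\
  Qf P z w = RInt (fun s => exp (- s) * Gf v P K z (w - s)) 0 w.
Proof. intros Hs z w Hz Hw. destruct Hs as [_ [_ H3]]. destruct (H3 z w Hz Hw) as [Hex Heq].
  assert (He : ex_RInt (fun s => exp (- s)) 0 w) by (eexists; apply exp_int; auto).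
  assert (Hm := ex_RInt_minus _ _ _ _ He Hex).
  assert (Hf : forall s, exp (-s) * Gf v P K z (w - s) = minus (exp (-s)) (exp (-s) * Hfun v P K z (w - s))).
  { intros s. unfold Gf, minus, plus, opp; simpl. ring. }
  split.
  - eapply ex_RInt_ext; [|exact Hm]. intros; simpl; now rewrite Hf.
  - rewrite (RInt_ext _ (fun s => minus (exp (-s)) (exp (-s) * Hfun v P K z (w - s)))).
    2:{ intros; apply Hf. }
    rewrite (RInt_minus (fun s => exp (-s)) (fun s => exp (-s) * Hfun v P K z (w - s))); auto. rewrite (is_RInt_unique _ _ _ _ (exp_int w Hw)).
    unfold Qf. rewrite Heq. unfold minus, plus, opp; simpl. ring.
Qed.


Lemma RInt_ub (f : R -> R) w B : 0 <= w -> ex_RInt f 0 w -> (forall s, 0 <= s <= w -> f s <= B) ->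
  RInt f 0 w <= w * B.
Proof. intros Hw Hex Hb.
  assert (RInt f 0 w <= RInt (fun _ => B) 0 w).
  { apply RInt_le; auto. apply ex_RInt_const. intros; apply Hb; lra. }
  rewrite RInt_const in H. unfold scal in H; simpl in H. unfold mult in H; simpl in H. lra. Qed.

Lemma RInt_lb (f : R -> R) w B : 0 < w -> ex_RInt f 0 w -> (forall s, 0 <= s <= w -> 0 <= f s) ->
  (forall s, 0 <= s <= w/2 -> B <= f s) -> w / 2 * B <= RInt f 0 w.
Proof. intros Hw Hex H0 Hb.
  assert (E1 : ex_RInt f 0 (w/2)) by (apply (ex_RInt_Chasles_1 f 0 (w/2) w); auto; lra).
  assert (E2 : ex_RInt f (w/2) w) by (apply (ex_RInt_Chasles_2 f 0 (w/2) w); auto; lra).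
  rewrite <- (RInt_Chasles f 0 (w/2) w E1 E2). unfold plus; simpl.
  assert (RInt (fun _ => B) 0 (w/2) <= RInt f 0 (w/2)).
  { apply RInt_le; auto. lra. apply ex_RInt_const. intros; apply Hb; lra. }
  rewrite RInt_const in H. unfold scal in H; simpl in H. unfold mult in H; simpl in H.
  assert (0 <= RInt f (w/2) w). { apply RInt_ge_0; auto. lra. intros; apply H0; lra. }
  lra. Qed.

Lemma Q_zero v P K : bomber_solution v P K -> forall z, 0 <= z -> Qf P z 0 = 0.
Proof. intros Hs z Hz. destruct (Q_int v P K Hs z 0 Hz (Rle_refl _)) as [_ E].
  rewrite E, RInt_point. reflexivity. Qed.

Lemma Q_le_w v P K : 0 < v <= 1 -> bomber_solution v P K -> forall z w, 0 <= z -> 0 <= w -> Qf P z w <= w.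
Proof. intros Hv Hs z w Hz Hw. destruct (Q_int v P K Hs z w Hz Hw) as [Ex E]. rewrite E.
  replace w with (w * 1) at 2 by ring. apply RInt_ub; auto. intros s Hs'.
  assert (exp (-s) <= 1) by (rewrite <- exp_0; apply expl; lra).
  assert (0 < exp (-s)) by apply exp_pos.
  pose proof (G_bounds v P K Hv Hs z (w - s) Hz ltac:(lra)). nra. Qed.


Definition LBprop (P : R -> R -> R) (m : nat) (A : R) :=
  forall z w, 0 <= z -> 0 < w <= /4 ->
    A * exp (- (z / INR m + (INR m + 1) / 2 * (- ln w))) <= Qf P z w.

Lemma alg1 N z y L : 0 < N -> z / (N+1) + N / 2 * L < y ->
  (z - y) / N + (N + 1) / 2 * L <= z / (N+1) + N / 2 * L.
Proof. intros HN H. set (u := z / (N+1)) in *.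
  assert (Hz : z = (N+1) * u) by (unfold u; field; lra).
  assert ((z - y) / N <= u - L / 2).
  { apply (Rmult_le_reg_r N); auto. unfold Rdiv. rewrite Rmult_assoc, Rinv_l by lra.
    rewrite Hz. nra. }
  lra. Qed.

Lemma L_pos w : 0 < w <= /4 -> 0 < - ln w.
Proof. intros Hw. assert (ln w < ln 1). { apply ln_increasing; lra. } rewrite ln_1 in H. lra. Qed.

Lemma exp_halfL w : 0 < w <= /4 -> exp (- (- ln w) / 2) <= /2.
Proof. intros Hw. set (e := exp (- (- ln w) / 2)).
  assert (He : e * e = w). { unfold e. rewrite <- exp_plus.
    replace (- - ln w / 2 + - - ln w / 2) with (ln w) by field. apply exp_ln; lra. }
  assert (0 < e) by apply exp_pos. nra. Qed.

Lemma G_lb v P K : 0 < v <= 1 -> bomber_solution v P K -> forall n A, 0 < A ->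
  (n = 0%nat \/ LBprop P n A) ->
  forall z w, 0 <= z -> 0 < w <= /4 ->
  Rmin v (A/2) * exp (- (z / INR (S n) + INR n / 2 * (- ln w))) <= Gf v P K z w.
Proof. intros Hv Hs n A HA IH z w Hz Hw.
  set (L := - ln w). assert (HL : 0 < L) by (apply L_pos; auto).
  set (y := K z w). destruct (K_bounds v P K Hs z w Hz ltac:(lra)) as [Hy0 Hy1]. fold y in Hy0, Hy1.
  destruct (G_ge_K v P K Hv Hs z w Hz ltac:(lra)) as [G1 G2]. fold y in G1, G2.
  rewrite S_INR. set (N := INR n) in *.
  assert (HN : 0 <= N) by apply pos_INR.
  assert (Hm1 : Rmin v (A/2) <= v) by apply Rmin_l.
  assert (Hm2 : Rmin v (A/2) <= A/2) by apply Rmin_r.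
  assert (Hm0 : 0 < Rmin v (A/2)) by (apply Rmin_glb_lt; lra).
  destruct (Rle_or_lt y (z / (N+1) + N / 2 * L)) as [C1|C2].
  - assert (exp (- (z / (N + 1) + N / 2 * L)) <= exp (- y)) by (apply expl; lra).
    assert (0 < exp (- (z / (N + 1) + N / 2 * L))) by apply exp_pos. nra.
  - destruct IH as [Hn0 | IH].
    + exfalso. subst N. rewrite Hn0 in C2. simpl in C2.
      replace (z / (0+1)) with z in C2 by field. lra.
    + assert (HNp : 0 < N).
      { destruct (Rle_lt_or_eq_dec _ _ HN) as [|E]; auto. exfalso. rewrite <- E in C2.
        replace (z / (0+1)) with z in C2 by field. lra. }
      assert (HN1 : 1 <= N).
      { assert (n <> 0%nat). { intro E. unfold N in HNp. rewrite E in HNp. simpl in HNp. lra. }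
        change 1 with (INR 1). unfold N. apply le_INR. lia. }
      assert (0 <= z / (N+1)) by (apply Rdiv_le_0_compat; lra).
      assert (Hb := IH (z - y) w ltac:(lra) Hw). fold N L in Hb.
      assert (Halg := alg1 N z y L HNp C2).
      assert (E1 : exp (- (z / (N + 1) + N / 2 * L)) <= exp (- ((z - y) / N + (N + 1) / 2 * L)))
        by (apply expl; lra).
      assert (Hay : /2 <= a v y).
      { unfold a. assert (exp (-y) <= exp (- L / 2)) by (apply expl; nra).
        pose proof (exp_halfL w Hw) as Hh. fold L in Hh. assert (0 < exp (-y)) by apply exp_pos. nra. }
      assert (0 < exp (- (z / (N + 1) + N / 2 * L))) by apply exp_pos.
      assert (Hq : 0 <= Qf P (z - y) w) by (apply (Q_bounds v P K Hs); lra).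
      nra.
Qed.

Lemma LB_step v P K : 0 < v <= 1 -> bomber_solution v P K -> forall n A, 0 < A ->
  (n = 0%nat \/ LBprop P n A) -> exists A', 0 < A' /\ LBprop P (S n) A'.
Proof. intros Hv Hs n A HA IH.
  set (B := Rmin v (A/2)). assert (HB : 0 < B) by (apply Rmin_glb_lt; lra).
  set (N := INR n). assert (HN : 0 <= N) by apply pos_INR.
  exists (exp (-1) * B * exp (- (N / 2 * ln 2)) / 2). split.
  { assert (0 < exp (-1)) by apply exp_pos. assert (0 < exp (- (N / 2 * ln 2))) by apply exp_pos.
    apply Rmult_lt_0_compat; [|lra]. apply Rmult_lt_0_compat; auto. apply Rmult_lt_0_compat; auto. }
  intros z w Hz Hw. set (L := - ln w).
  destruct (Q_int v P K Hs z w Hz ltac:(lra)) as [Ex E]. rewrite E.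
  set (c := exp (-1) * (B * exp (- (z / (N+1) + N / 2 * (L + ln 2))))).
  assert (Hc : w / 2 * c <= RInt (fun s => exp (- s) * Gf v P K z (w - s)) 0 w).
  { apply RInt_lb; try lra; auto.
    - intros s Hs'. pose proof (G_bounds v P K Hv Hs z (w - s) Hz ltac:(lra)).
      pose proof (exp_pos (-s)). nra.
    - intros s Hs'. unfold c.
      assert (Hg := G_lb v P K Hv Hs n A HA IH z (w - s) Hz ltac:(lra)).
      rewrite S_INR in Hg. fold N B in Hg.
      assert (Hln : - ln (w - s) <= L + ln 2).
      { unfold L. assert (ln (w/2) <= ln (w - s)) by (apply ln_le; lra).
        unfold Rdiv in H. rewrite ln_mult in H by lra. rewrite ln_Rinv in H by lra. lra. }
      assert (exp (- (z / (N + 1) + N / 2 * (L + ln 2))) <= exp (- (z / (N + 1) + N / 2 * - ln (w - s))))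
        by (apply expl; apply Ropp_le_contravar, Rplus_le_compat_l, Rmult_le_compat_l; lra).
      assert (exp (-1) <= exp (-s)) by (apply expl; lra).
      pose proof (exp_pos (-1)). pose proof (exp_pos (- (z / (N + 1) + N / 2 * (L + ln 2)))).
      pose proof (G_bounds v P K Hv Hs z (w - s) Hz ltac:(lra)).
      apply Rle_trans with (exp (-1) * Gf v P K z (w - s)).
      + apply Rmult_le_compat_l; [lra|]. eapply Rle_trans; [|exact Hg].
        apply Rmult_le_compat_l; lra.
      + apply Rmult_le_compat_r; lra. }
  eapply Rle_trans; [|exact Hc]. right. unfold c.
  replace w with (exp (- L)) at 1 by (unfold L; rewrite Ropp_involutive; apply exp_ln; lra).
  rewrite S_INR. fold N. fold L.
  replace (- (z / (N + 1) + (N + 1 + 1) / 2 * L)) with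
    (- L + - (z / (N + 1) + N / 2 * L)) by (field; lra).
  replace (- (z / (N + 1) + N / 2 * (L + ln 2))) with
    (- (N / 2 * ln 2) + - (z / (N + 1) + N / 2 * L)) by (field; lra).
  rewrite !exp_plus. field.
Qed.

Lemma LB_all v P K : 0 < v <= 1 -> bomber_solution v P K -> forall n, exists A, 0 < A /\ LBprop P (S n) A.
Proof. intros Hv Hs n. induction n.
  - apply (LB_step v P K Hv Hs 0 1); auto; lra.
  - destruct IHn as [A [HA H]]. apply (LB_step v P K Hv Hs (S n) A HA); auto.
Qed.


Definition Tk (z L : R) (k : nat) := z / INR k + (INR k + 1) / 2 * L.

Definition UBprop (P : R -> R -> R) (m : nat) (C : R) :=
  forall z w T, 0 <= z -> 0 < w < 1 ->
    (forall k, (1 <= k <= m)%nat -> T <= Tk z (- ln w) k) ->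
    Qf P z w <= C * (exp (- T) + w ^ (S m)).

Lemma alg2 Kk z T L : 1 <= Kk -> T <= z / (Kk + 1) + (Kk + 2) / 2 * L ->
  T - L <= (z - (T - L)) / Kk + (Kk + 1) / 2 * L.
Proof. intros HK H. set (u := z / (Kk+1)) in *.
  assert (Hz : z = (Kk+1) * u) by (unfold u; field; lra).
  set (y := T - L).
  assert (Kk * y <= z - y + Kk * (Kk+1)/2 * L) by (unfold y; rewrite Hz; nra).
  assert (y <= (z - y) / Kk + (Kk+1)/2 * L); auto.
  apply (Rmult_le_reg_l Kk); [lra|].
  rewrite Rmult_plus_distr_l. unfold Rdiv at 1. 
  replace (Kk * ((z - y) * / Kk)) with (z - y) by (field; lra). lra. Qed.

Lemma Tk_ge_L z L k : 0 <= z -> 0 < L -> (1 <= k)%nat -> L <= Tk z L k.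
Proof. intros Hz HL Hk. unfold Tk. assert (1 <= INR k) by (change 1 with (INR 1); apply le_INR; lia).
  assert (0 <= z / INR k) by (apply Rdiv_le_0_compat; lra). nra. Qed.

Lemma lnw_pos w : 0 < w < 1 -> 0 < - ln w.
Proof. intros Hw. assert (ln w < ln 1) by (apply ln_increasing; lra). rewrite ln_1 in H. lra. Qed.

Lemma G_ub v P K : 0 < v <= 1 -> bomber_solution v P K -> forall n C', 0 <= C' -> UBprop P n C' ->
  forall z w w' T, 0 <= z -> 0 < w < 1 -> 0 <= w' <= w -> - ln w <= T ->
  (forall k, (1 <= k <= S n)%nat -> T <= Tk z (- ln w) k) ->
  Gf v P K z w' <= (v + C') * (exp (- (T - - ln w)) + w ^ (S n)).
Proof. intros Hv Hs n C' HC IH z w w' T Hz Hw Hw' HT Hk.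
  set (L := - ln w) in *. set (y := T - L).
  assert (HL : 0 < L) by (apply lnw_pos; auto).
  assert (Hy1 : y <= z). { pose proof (Hk 1%nat ltac:(lia)) as H1. unfold Tk in H1. simpl in H1.
    unfold y. replace (z / 1 + (1 + 1) / 2 * L) with (z + L) in H1 by field. lra. }
  assert (Hy0 : 0 <= y <= z) by (split; [unfold y; lra | exact Hy1]).
  assert (Hw'0 : 0 <= w') by lra.
  assert (Hg := G_le v P K Hv Hs z w' y Hz Hw'0 Hy0).
  assert (Hey : 0 < exp (- y)) by apply exp_pos.
  assert (Hwp : 0 <= w ^ S n) by (apply pow_le; lra).
  destruct (Rle_lt_or_eq_dec _ _ (proj1 Hw')) as [Hw0|Hw0].
  - assert (Hq : Qf P (z - y) w' <= C' * (exp (- y) + w' ^ S n)).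
    { apply IH; try lra. intros k Hk'. unfold Tk.
      assert (HK1 : 1 <= INR k) by (change 1 with (INR 1); apply le_INR; lia).
      assert (Hln : L <= - ln w') . { unfold L. assert (ln w' <= ln w) by (apply ln_le; lra). lra. }
      pose proof (Hk (S k) ltac:(lia)) as H2. unfold Tk in H2. rewrite S_INR in H2. fold L in H2.
      replace (INR k + 1 + 1) with (INR k + 2) in H2 by ring.
      pose proof (alg2 (INR k) z T L HK1 H2). fold y in H.
      assert ((INR k + 1) / 2 * L <= (INR k + 1) / 2 * - ln w') by (apply Rmult_le_compat_l; lra).
      lra. }
    assert (w' ^ S n <= w ^ S n) by (apply pow_incr; lra).
    nra.
  - rewrite <- Hw0 in *. rewrite (Q_zero v P K Hs) in Hg by lra. assert (0 <= C' * exp (- y)) by (apply Rmult_le_pos; lra). nra.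
Qed.

Lemma UB_all v P K : 0 < v <= 1 -> bomber_solution v P K -> forall m, exists C, 0 < C /\ UBprop P m C.
Proof. intros Hv Hs m. induction m.
  - exists 1. split; [lra|]. intros z w T Hz Hw _. pose proof (Q_le_w v P K Hv Hs z w Hz ltac:(lra)).
    pose proof (exp_pos (-T)). simpl. lra.
  - destruct IHm as [C' [HC' IH]]. exists (v + C'). split; [lra|].
    intros z w T Hz Hw Hk. set (L := - ln w) in *. assert (HL : 0 < L) by (apply lnw_pos; auto).
    set (T2 := Rmax T L).
    assert (Hk2 : forall k, (1 <= k <= S m)%nat -> T2 <= Tk z L k).
    { intros k Hk'. unfold T2. apply Rmax_lub; auto. apply Tk_ge_L; auto; lia. }
    assert (HT2 : L <= T2) by apply Rmax_r.
    destruct (Q_int v P K Hs z w Hz ltac:(lra)) as [Ex E]. rewrite E.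
    eapply Rle_trans. apply RInt_ub; [lra|exact Ex|].
    { intros s Hs'. pose proof (G_ub v P K Hv Hs m C' ltac:(lra) IH z w (w - s) T2 Hz Hw ltac:(lra) HT2 Hk2) as Hg.
      pose proof (G_bounds v P K Hv Hs z (w - s) Hz ltac:(lra)).
      assert (exp (-s) <= 1) by (rewrite <- exp_0; apply expl; lra).
      pose proof (exp_pos (-s)).
      apply Rle_trans with (Gf v P K z (w - s)); [nra|exact Hg]. }
    assert (Hw2 : w * exp (- (T2 - L)) = exp (- T2)).
    { replace w with (exp (- L)) at 1 by (unfold L; rewrite Ropp_involutive; apply exp_ln; lra).
      rewrite <- exp_plus. f_equal; ring. }
    assert (exp (- T2) <= exp (- T)) by (apply expl; unfold T2; pose proof (Rmax_l T L); lra).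
    fold L.
    replace (w * ((v + C') * (exp (- (T2 - L)) + w ^ S m))) with
      ((v + C') * (w * exp (- (T2 - L)) + w ^ S (S m))) by (simpl; ring).
    rewrite Hw2. apply Rmult_le_compat_l; lra.
Qed.


Lemma lim_to_eps (g : R -> R) l : filterlim g (at_right 0) (locally l) ->
  forall eta, 0 < eta -> exists delta, 0 < delta /\ forall t, 0 < t < delta -> Rabs (g t - l) < eta.
Proof. intros H eta He. apply filterlim_locally with (eps := mkposreal eta He) in H.
  destruct H as [d Hd]. exists d. split. apply cond_pos. intros t Ht.
  specialize (Hd t). assert (Hb : ball 0 d t).
  { unfold ball; simpl; unfold AbsRing_ball, abs, minus, plus, opp; simpl. rewrite Rabs_right; lra. }
  specialize (Hd Hb ltac:(lra)). unfold ball in Hd; simpl in Hd; unfold AbsRing_ball, abs, minus, plus, opp in Hd; simpl in Hd.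
  exact Hd. Qed.

Lemma eps_to_lim (g : R -> R) l :
  (forall eps, 0 < eps -> exists delta, 0 < delta /\ forall t, 0 < t < delta -> Rabs (g t - l) < eps) ->
  filterlim g (at_right 0) (locally l).
Proof. intros H. apply filterlim_locally. intros eps. destruct (H eps (cond_pos eps)) as [d [Hd H2]].
  exists (mkposreal d Hd). intros t Hb Ht. unfold ball in Hb; simpl in Hb;
  unfold AbsRing_ball, abs, minus, plus, opp in Hb; simpl in Hb.
  assert (Hb2 : Rabs ((t:R) - 0) < d) by exact Hb. rewrite Rminus_0_r, Rabs_right in Hb2 by lra.
  unfold ball; simpl; unfold AbsRing_ball, abs, minus, plus, opp; simpl. apply H2. lra. Qed.

Lemma disc (j : nat) rho : (1 <= j)%nat -> 2 / (INR (j + 1) * INR j) <= rho ->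
  (j = 1%nat \/ rho < 2 / (INR j * INR (j - 1))) ->
  forall k, (1 <= k)%nat -> 1 / INR j + (INR j + 1) / 2 * rho <= 1 / INR k + (INR k + 1) / 2 * rho.
Proof. intros Hj H1 H2 k Hk.
  assert (HJ : 1 <= INR j) by (change 1 with (INR 1); apply le_INR; lia).
  assert (HK : 1 <= INR k) by (change 1 with (INR 1); apply le_INR; lia).
  assert (E : 1 / INR k + (INR k + 1) / 2 * rho - (1 / INR j + (INR j + 1) / 2 * rho)
     = (INR k - INR j) * (rho / 2 - 1 / (INR j * INR k))) by (field; lra).
  cut (0 <= (INR k - INR j) * (rho / 2 - 1 / (INR j * INR k))); [lra|].
  destruct (Nat.lt_ge_cases k j) as [Hkj|Hkj].
  - destruct H2 as [H2|H2]; [lia|].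
    rewrite minus_INR in H2 by lia. simpl in H2.
    assert (HK2 : INR k <= INR j - 1).
    { assert (INR (S k) <= INR j) by (apply le_INR; lia). rewrite S_INR in H. lra. }
    assert (1 / (INR j * (INR j - 1)) <= 1 / (INR j * INR k)).
    { unfold Rdiv. rewrite !Rmult_1_l. apply Rinv_le_contravar. nra. apply Rmult_le_compat_l; lra. }
    assert (rho / 2 < 1 / (INR j * (INR j - 1))).
    { replace (1 / (INR j * (INR j - 1))) with ((2 / (INR j * (INR j - 1))) / 2) by (field; nra). lra. }
    assert (INR k - INR j < 0) by lra. nra.
  - assert (HKJ : INR j <= INR k) by (apply le_INR; lia).
    destruct (Nat.eq_dec k j) as [->|Hne]. { replace (INR j - INR j) with 0 by ring. lra. }
    assert (HK2 : INR j + 1 <= INR k).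
    { assert (INR (S j) <= INR k) by (apply le_INR; lia). rewrite S_INR in H. lra. }
    rewrite plus_INR in H1. simpl in H1.
    assert (1 / (INR j * INR k) <= 1 / ((INR j + 1) * INR j)).
    { unfold Rdiv. rewrite !Rmult_1_l. apply Rinv_le_contravar. nra. nra. }
    assert (1 / ((INR j + 1) * INR j) <= rho / 2).
    { replace (1 / ((INR j + 1) * INR j)) with ((2 / ((INR j + 1) * INR j)) / 2) by (field; nra). lra. }
    apply Rmult_le_pos; lra.
Qed.


Lemma exp_pow a m : exp a ^ m = exp (INR m * a).
Proof. induction m. simpl. rewrite Rmult_0_l, exp_0. reflexivity.
  rewrite S_INR. simpl pow. rewrite IHm, <- exp_plus. f_equal. ring. Qed.

Lemma ln_le_exp a b : 0 < a -> a <= exp b -> ln a <= b.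
Proof. intros Ha H. apply expl_inv. rewrite exp_ln; auto. Qed.

Lemma ge_ln a b : exp b <= a -> b <= ln a.
Proof. intros H. pose proof (exp_pos b). apply expl_inv. rewrite exp_ln; lra. Qed.

Lemma fin_arith F x l E c eps : 0 < x -> x * l - x * E - c <= F -> F <= x * l + x * E + c ->
  E < eps / 2 -> c < x * eps / 2 -> Rabs (F / x - l) < eps.
Proof. intros Hx H1 H2 HE Hc.
  assert (Hc' : c / x < eps / 2). { apply (Rmult_lt_reg_r x); auto. unfold Rdiv. rewrite Rmult_assoc, Rinv_l by lra. lra. }
  assert (E1 : F / x - l <= E + c / x).
  { apply (Rmult_le_reg_r x); auto. unfold Rdiv. field_simplify; [|lra|lra]. lra. }
  assert (E2 : - E - c / x <= F / x - l).
  { apply (Rmult_le_reg_r x); auto. unfold Rdiv. field_simplify; [|lra|lra]. lra. }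
  apply Rabs_def1; lra. Qed.

Lemma abs_bt r rho e : Rabs (r - rho) <= e -> rho - e <= r <= rho + e.
Proof. unfold Rabs. destruct (Rcase_abs (r - rho)); lra. Qed.

Lemma constr (rho f x r e N : R) (n : nat) : 0 < x -> Rabs (r - rho) <= e -> N = INR n ->
  (forall k, (1 <= k)%nat -> f <= 1 / INR k + (INR k + 1) / 2 * rho) ->
  forall k, (1 <= k <= S n)%nat -> x * (f - (N + 2) / 2 * e) <= Tk x (r * x) k.
Proof. intros Hx He HN Hd k Hk. unfold Tk. specialize (Hd k ltac:(lia)).
  assert (HK : 1 <= INR k) by (change 1 with (INR 1); apply le_INR; lia).
  assert (HKN : INR k <= N + 1) by (rewrite HN, <- S_INR; apply le_INR; lia).
  assert (He0 : 0 <= e) by (pose proof (Rabs_pos (r - rho)); lra).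
  destruct (abs_bt _ _ _ He) as [Hr1 Hr2].
  assert (Hx1 : x / INR k = x * (1 / INR k)) by (field; lra).
  rewrite Hx1.
  assert (f - (N + 2) / 2 * e <= 1 / INR k + (INR k + 1) / 2 * r).
  { assert ((INR k + 1) / 2 * (rho - r) <= (N + 2) / 2 * e).
    { apply Rle_trans with ((INR k + 1) / 2 * e). apply Rmult_le_compat_l; lra.
      apply Rmult_le_compat_r; lra. }
    lra. }
  nra. Qed.


Definition cst v j A1 A0 C' C2 :=
  Rabs (ln A1) + Rabs (ln (2*C2)) + Rabs (ln (Rmin v (A0/2))) + Rabs (ln (2*(v+C'))) + Rabs (ln v)
  + INR j * Rabs (ln (A0/(4*(v+C')))) + Rabs (ln (4*(v+C'))).

Lemma cst_pos v j A1 A0 C' C2 : 0 <= cst v j A1 A0 C' C2.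
Proof. unfold cst. pose proof (pos_INR j).
  assert (0 <= INR j * Rabs (ln (A0 / (4 * (v + C'))))) by (apply Rmult_le_pos; auto; apply Rabs_pos).
  pose proof (Rabs_pos (ln A1)). pose proof (Rabs_pos (ln (2*C2))). pose proof (Rabs_pos (ln (Rmin v (A0/2)))).
  pose proof (Rabs_pos (ln (2*(v+C')))). pose proof (Rabs_pos (ln v)). pose proof (Rabs_pos (ln (4*(v+C')))).
  lra. Qed.

Section Est.
Variables (v : R) (P K : R -> R -> R) (j n : nat) (rho A1 A0 C' C2 : R).
Hypotheses (Hv : 0 < v <= 1) (Hs : bomber_solution v P K) (Hj : (1 <= j)%nat) (Hrho : 0 < rho)
  (Hd : forall k, (1 <= k)%nat -> 1 / INR j + (INR j + 1) / 2 * rho <= 1 / INR k + (INR k + 1) / 2 * rho)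
  (HA1 : 0 < A1) (LB1 : LBprop P j A1) (HA0 : 0 < A0) (LB0 : (j - 1)%nat = 0%nat \/ LBprop P (j - 1) A0)
  (HC' : 0 < C') (UB1 : UBprop P n C') (HC2 : 0 < C2) (UB2 : UBprop P (S n) C2)
  (Hn : 2 * (1 / INR j + (INR j + 1) / 2 * rho) <= INR n * rho).

Let J := INR j.
Let N := INR n.
Let f := 1 / J + (J + 1) / 2 * rho.
Let kap := 1 / J + (J - 1) / 2 * rho.
Let M := (J + 1) * ((N + 2) / 2 + 2 + J).

Lemma est_P x t e : 0 < x -> 0 < t < /4 -> Rabs ((- ln t) / x - rho) <= e -> e <= rho / 2 ->
  x * f - x * (M * e) - cst v j A1 A0 C' C2 <= Rabs (ln (1 - P x t)) <= x * f + x * (M * e) + cst v j A1 A0 C' C2.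
Proof using All. intros Hx Ht He Her.
  set (L := - ln t). set (r := L / x). assert (HL : L = r * x) by (unfold r; field; lra).
  assert (HLp : 0 < L) by (apply L_pos; lra).
  assert (HJ : 1 <= J) by (unfold J; change 1 with (INR 1); apply le_INR; lia).
  assert (HN : 0 <= N) by (unfold N; apply pos_INR).
  assert (He0 : 0 <= e) by (eapply Rle_trans; [apply Rabs_pos|exact He]).
  destruct (abs_bt _ _ _ He) as [Hr1 Hr2]. fold L r in Hr1, Hr2.
  set (T := x * (f - (N + 2) / 2 * e)).
  assert (HT : forall k, (1 <= k <= S n)%nat -> T <= Tk x (- ln t) k).
  { intros k Hk. fold L. rewrite HL. apply (constr rho f x r e N n); auto. }
  assert (Hq := UB2 x t T ltac:(lra) ltac:(lra) HT).
  assert (Hpow : t ^ S (S n) <= exp (- T)).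
  { replace t with (exp (- L)) by (unfold L; rewrite Ropp_involutive; apply exp_ln; lra).
    rewrite exp_pow. apply expl. rewrite !S_INR. fold N. rewrite HL. unfold T.
    assert (f <= (N + 2) * r).
    { assert (f <= (N+2) * (rho/2)) by (unfold f, J, N in *; nra).
      assert ((N+2) * (rho/2) <= (N+2) * r) by (apply Rmult_le_compat_l; lra). lra. }
    assert (x * f <= x * ((N + 2) * r)) by (apply Rmult_le_compat_l; lra).
    assert (0 <= x * ((N + 2) / 2 * e)) by (apply Rmult_le_pos; [lra|apply Rmult_le_pos; lra]).
    replace (N + 1 + 1) with (N + 2) by ring. nra. }
  assert (Hql := LB1 x t ltac:(lra) ltac:(lra)). fold J L in Hql.
  assert (Hq0 : 0 < Qf P x t).
  { eapply Rlt_le_trans; [|exact Hql]. apply Rmult_lt_0_compat; auto. apply exp_pos. }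
  assert (Hq1 : Qf P x t <= 1) by (apply (Q_bounds v P K Hs); lra).
  assert (Hln0 : ln (Qf P x t) <= 0) by (rewrite <- ln_1; apply ln_le; lra).
  change (1 - P x t) with (Qf P x t). rewrite Rabs_left1 by lra.
  assert (U : ln (Qf P x t) <= ln (2 * C2) - T).
  { apply ln_le_exp; auto. unfold Rminus. rewrite exp_plus, exp_ln by lra.
    assert (C2 * (exp (- T) + t ^ S (S n)) <= C2 * (exp (- T) + exp (- T))) by (apply Rmult_le_compat_l; lra).
    lra. }
  assert (V : ln A1 - (x / J + (J + 1) / 2 * L) <= ln (Qf P x t)).
  { apply ge_ln. unfold Rminus. rewrite exp_plus, exp_ln by lra. exact Hql. }
  assert (Hc := cst_pos v j A1 A0 C' C2).
  assert (Hc1 : Rabs (ln A1) + Rabs (ln (2 * C2)) <= cst v j A1 A0 C' C2).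
  { unfold cst. pose proof (pos_INR j).
  assert (0 <= INR j * Rabs (ln (A0 / (4 * (v + C'))))) by (apply Rmult_le_pos; auto; apply Rabs_pos).
  pose proof (Rabs_pos (ln A1)). pose proof (Rabs_pos (ln (2*C2))). pose proof (Rabs_pos (ln (Rmin v (A0/2)))).
  pose proof (Rabs_pos (ln (2*(v+C')))). pose proof (Rabs_pos (ln v)). pose proof (Rabs_pos (ln (4*(v+C')))).
  lra. }
  pose proof (Rle_abs (ln A1)). pose proof (Rle_abs (- ln A1)). rewrite Rabs_Ropp in H0.
  pose proof (Rle_abs (ln (2*C2))). pose proof (Rle_abs (- ln (2*C2))). rewrite Rabs_Ropp in H2.
  assert (HM1 : (N + 2) / 2 <= M) by (unfold M; nra).
  assert (HM2 : (J + 1) / 2 <= M) by (unfold M; nra).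
  split.
  - unfold T in U. assert (x * ((N + 2) / 2 * e) <= x * (M * e)).
    { apply Rmult_le_compat_l; [lra|]. apply Rmult_le_compat_r; lra. }
    nra.
  - assert (x / J + (J + 1) / 2 * L <= x * f + x * (M * e)).
    { rewrite HL. unfold f. replace (x / J) with (x * (1 / J)) by (field; lra).
      assert ((J + 1) / 2 * r <= (J+1)/2 * rho + M * e).
      { assert ((J+1)/2 * (r - rho) <= (J+1)/2 * e) by (apply Rmult_le_compat_l; lra).
        assert ((J+1)/2 * e <= M * e) by (apply Rmult_le_compat_r; lra). lra. }
      nra. }
    lra.
Qed.

Lemma cst_ge x : Rabs (ln A1) + Rabs (ln (2*C2)) + Rabs (ln (Rmin v (A0/2))) + Rabs (ln (2*(v+C'))) + Rabs (ln v)
  + INR j * Rabs (ln (A0/(4*(v+C')))) + Rabs (ln (4*(v+C'))) = x -> cst v j A1 A0 C' C2 = x.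
Proof. auto. Qed.

Lemma est_common x t e : 0 < x -> 0 < t < /4 -> Rabs ((- ln t) / x - rho) <= e -> e <= rho / 2 ->
  ((N + 2) / 2 + 1) * e <= kap / 2 ->
  let L := - ln t in let r := L / x in let T := x * (f - (N + 2) / 2 * e) in
  L = r * x /\ rho - e <= r <= rho + e /\ 0 <= e /\
  x * (kap / 2) <= T - L /\ x * kap - x * (((N + 2) / 2 + 1) * e) <= T - L /\
  Gf v P K x t <= 2 * (v + C') * exp (- (T - L)) /\ 0 < Gf v P K x t <= 1.
Proof. intros Hx Ht He Her Hek L r T.
  assert (HL : L = r * x) by (unfold r; field; lra).
  assert (HLp : 0 < L) by (apply L_pos; lra).
  assert (HJ : 1 <= J) by (unfold J; change 1 with (INR 1); apply le_INR; lia).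
  assert (HN : 0 <= N) by (unfold N; apply pos_INR).
  assert (He0 : 0 <= e) by (eapply Rle_trans; [apply Rabs_pos|exact He]).
  destruct (abs_bt _ _ _ He) as [Hr1 Hr2]. fold L r in Hr1, Hr2.
  assert (Hkf : kap = f - rho) by (unfold kap, f; field; lra).
  assert (HTL : x * kap - x * (((N + 2) / 2 + 1) * e) <= T - L).
  { unfold T. rewrite HL. assert (x * r <= x * (rho + e)) by (apply Rmult_le_compat_l; lra). nra. }
  assert (HTL2 : x * (kap / 2) <= T - L).
  { assert (x * (((N + 2) / 2 + 1) * e) <= x * (kap/2)) by (apply Rmult_le_compat_l; lra). lra. }
  assert (Hkp : 0 < kap).
  { unfold kap. assert (0 < 1 / J) by (unfold Rdiv; rewrite Rmult_1_l; apply Rinv_0_lt_compat; lra).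
    assert (0 <= (J - 1) / 2 * rho) by (apply Rmult_le_pos; lra). lra. }
  assert (HT : forall k, (1 <= k <= S n)%nat -> T <= Tk x (- ln t) k).
  { intros k Hk. fold L. rewrite HL. apply (constr rho f x r e N n); auto. }
  assert (HLT : - ln t <= T) by (fold L; nra).
  assert (Hg := G_ub v P K Hv Hs n C' ltac:(lra) UB1 x t t T ltac:(lra) ltac:(lra) ltac:(lra) HLT HT).
  fold L in Hg.
  assert (Hpow : t ^ S n <= exp (- (T - L))).
  { replace t with (exp (- L)) by (unfold L; rewrite Ropp_involutive; apply exp_ln; lra).
    rewrite exp_pow. apply expl. rewrite !S_INR. fold N. rewrite HL. unfold T.
    assert (f <= (N + 2) * r).
    { assert (f <= (N+2) * (rho/2)) by (unfold f, J, N in *; nra).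
      assert ((N+2) * (rho/2) <= (N+2) * r) by (apply Rmult_le_compat_l; lra). lra. }
    assert (x * f <= x * ((N + 2) * r)) by (apply Rmult_le_compat_l; lra).
    assert (0 <= x * ((N + 2) / 2 * e)) by (apply Rmult_le_pos; [lra|apply Rmult_le_pos; lra]).
    nra. }
  assert (Hgl := G_lb v P K Hv Hs (j - 1) A0 HA0 LB0 x t ltac:(lra) ltac:(lra)).
  assert (0 < Gf v P K x t).
  { eapply Rlt_le_trans; [|exact Hgl]. apply Rmult_lt_0_compat. apply Rmin_glb_lt; lra. apply exp_pos. }
  pose proof (G_bounds v P K Hv Hs x t ltac:(lra) ltac:(lra)).
  repeat split; try lra.
  assert ((v + C') * (exp (- (T - L)) + t ^ S n) <= (v + C') * (exp (- (T - L)) + exp (- (T - L))))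
    by (apply Rmult_le_compat_l; lra). lra.
Qed.


Lemma cst_facts : 0 <= cst v j A1 A0 C' C2 /\
  Rabs (ln (Rmin v (A0/2))) + Rabs (ln (2*(v+C'))) <= cst v j A1 A0 C' C2 /\
  Rabs (ln v) + Rabs (ln (2*(v+C'))) <= cst v j A1 A0 C' C2 /\
  Rabs (ln (4*(v+C'))) <= cst v j A1 A0 C' C2 /\
  INR j * Rabs (ln (A0/(4*(v+C')))) <= cst v j A1 A0 C' C2.
Proof. unfold cst. pose proof (pos_INR j).
  assert (0 <= INR j * Rabs (ln (A0 / (4 * (v + C'))))) by (apply Rmult_le_pos; auto; apply Rabs_pos).
  pose proof (Rabs_pos (ln A1)). pose proof (Rabs_pos (ln (2*C2))). pose proof (Rabs_pos (ln (Rmin v (A0/2)))).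
  pose proof (Rabs_pos (ln (2*(v+C')))). pose proof (Rabs_pos (ln v)). pose proof (Rabs_pos (ln (4*(v+C')))).
  repeat split; lra. Qed.

Lemma est_H x t e : 0 < x -> 0 < t < /4 -> Rabs ((- ln t) / x - rho) <= e -> e <= rho / 2 ->
  ((N + 2) / 2 + 1) * e <= kap / 2 ->
  x * kap - x * (M * e) - cst v j A1 A0 C' C2 <= Rabs (ln (1 - Hfun v P K x t)) <= x * kap + x * (M * e) + cst v j A1 A0 C' C2.
Proof using All. intros Hx Ht He Her Hek.
  destruct (est_common x t e Hx Ht He Her Hek) as [HL [[Hr1 Hr2] [He0 [HTL2 [HTL [Hg [Hg0 Hg1]]]]]]].
  set (L := - ln t) in *. set (r := L / x) in *. set (T := x * (f - (N + 2) / 2 * e)) in *.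
  assert (HJ : 1 <= J) by (unfold J; change 1 with (INR 1); apply le_INR; lia).
  assert (HN : 0 <= N) by (unfold N; apply pos_INR).
  assert (Hgl := G_lb v P K Hv Hs (j - 1) A0 HA0 LB0 x t ltac:(lra) ltac:(lra)).
  replace (S (j - 1)) with j in Hgl by lia. rewrite minus_INR in Hgl by lia. simpl INR in Hgl.
  fold J L in Hgl. set (Bc := Rmin v (A0 / 2)) in *.
  assert (HBc : 0 < Bc) by (apply Rmin_glb_lt; lra).
  change (1 - Hfun v P K x t) with (Gf v P K x t).
  assert (Hln0 : ln (Gf v P K x t) <= 0) by (rewrite <- ln_1; apply ln_le; lra).
  rewrite Rabs_left1 by lra.
  assert (U : ln (Gf v P K x t) <= ln (2 * (v + C')) - (T - L)).
  { apply ln_le_exp; auto. unfold Rminus at 1. rewrite exp_plus, exp_ln by lra. lra. }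
  assert (V : ln Bc - (x / J + (J - 1) / 2 * L) <= ln (Gf v P K x t)).
  { apply ge_ln. unfold Rminus. rewrite exp_plus, exp_ln by lra. exact Hgl. }
  destruct cst_facts as [Hc0 [Hc1 _]].
  pose proof (Rle_abs (ln Bc)). pose proof (Rle_abs (- ln Bc)). rewrite Rabs_Ropp in H0.
  pose proof (Rle_abs (ln (2*(v+C')))). pose proof (Rle_abs (- ln (2*(v+C')))). rewrite Rabs_Ropp in H2.
  assert (HM1 : (N + 2) / 2 + 1 <= M) by (unfold M; nra).
  assert (HM2 : (J - 1) / 2 <= M) by (unfold M; nra).
  split.
  - assert (x * (((N + 2) / 2 + 1) * e) <= x * (M * e)).
    { apply Rmult_le_compat_l; [lra|]. apply Rmult_le_compat_r; lra. }
    pose proof (Rabs_pos (ln (Rmin v (A0 / 2)))). lra.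
  - assert (x / J + (J - 1) / 2 * L <= x * kap + x * (M * e)).
    { rewrite HL. unfold kap. replace (x / J) with (x * (1 / J)) by (field; lra).
      assert ((J - 1) / 2 * r <= (J - 1)/2 * rho + M * e).
      { assert ((J - 1)/2 * (r - rho) <= (J - 1)/2 * e) by (apply Rmult_le_compat_l; lra).
        assert ((J - 1)/2 * e <= M * e) by (apply Rmult_le_compat_r; lra). lra. }
      assert (x * ((J - 1) / 2 * r) <= x * ((J - 1)/2 * rho + M * e)) by (apply Rmult_le_compat_l; lra).
      replace ((J - 1) / 2 * (r * x)) with (x * ((J - 1) / 2 * r)) by ring. lra. }
    fold Bc in Hc1. pose proof (Rabs_pos (ln Bc)). pose proof (Rabs_pos (ln (2 * (v + C')))). lra.
Qed.

Lemma est_K x t e : 0 < x -> 0 < t < /4 -> Rabs ((- ln t) / x - rho) <= e -> e <= rho / 2 ->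
  ((N + 2) / 2 + 1) * e <= kap / 2 -> cst v j A1 A0 C' C2 <= x * (kap / 2) ->
  x * kap - x * (M * e) - cst v j A1 A0 C' C2 <= K x t <= x * kap + x * (M * e) + cst v j A1 A0 C' C2.
Proof using All. intros Hx Ht He Her Hek Hcx.
  destruct (est_common x t e Hx Ht He Her Hek) as [HL [[Hr1 Hr2] [He0 [HTL2 [HTL [Hg [Hg0 Hg1]]]]]]].
  set (L := - ln t) in *. set (r := L / x) in *. set (T := x * (f - (N + 2) / 2 * e)) in *.
  assert (HJ : 1 <= J) by (unfold J; change 1 with (INR 1); apply le_INR; lia).
  assert (HN : 0 <= N) by (unfold N; apply pos_INR).
  set (Cc := v + C') in *. assert (HCc : 0 < Cc) by (unfold Cc; lra).
  destruct cst_facts as [Hc0 [_ [Hc2 [Hc3 Hc4]]]]. fold Cc in Hc2, Hc3, Hc4.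
  destruct (K_bounds v P K Hs x t ltac:(lra) ltac:(lra)) as [Hk0 Hk1].
  set (k := K x t) in *.
  destruct (G_ge_K v P K Hv Hs x t ltac:(lra) ltac:(lra)) as [G1 G2]. fold k in G1, G2.
  assert (HM1 : (N + 2) / 2 + 1 <= M) by (unfold M; nra).
  assert (Hxe : x * (((N + 2) / 2 + 1) * e) <= x * (M * e)).
  { apply Rmult_le_compat_l; [lra|]. apply Rmult_le_compat_r; lra. }
  split.
  - assert (W : ln v - k <= ln (2 * Cc) - (T - L)).
    { apply expl_inv.
      replace (exp (ln v - k)) with (v * exp (- k)) by (unfold Rminus; rewrite exp_plus, exp_ln by lra; reflexivity).
      replace (exp (ln (2 * Cc) - (T - L))) with (2 * Cc * exp (- (T - L)))
        by (replace (ln (2*Cc) - (T - L)) with (ln (2*Cc) + - (T - L)) by ring; rewrite exp_plus, exp_ln by lra; reflexivity). lra. }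
    pose proof (Rle_abs (ln v)). pose proof (Rle_abs (- ln v)). rewrite Rabs_Ropp in H0.
    pose proof (Rle_abs (ln (2*Cc))). pose proof (Rle_abs (- ln (2*Cc))). rewrite Rabs_Ropp in H2.
    lra.
  - destruct (Nat.eq_dec j 1) as [Hj1|Hj1].
    + assert (Hkap1 : kap = 1) by (unfold kap, J; rewrite Hj1; simpl; field).
      rewrite Hkap1. assert (0 <= x * (M * e)) by (apply Rmult_le_pos; [lra| apply Rmult_le_pos; unfold M; nra]).
      lra.
    + assert (LB0' : LBprop P (j - 1) A0) by (destruct LB0; [lia|auto]).
      assert (HJ2 : 2 <= J) by (unfold J; change 2 with (INR 2); apply le_INR; lia).
      assert (Hlam : Rabs (ln (4 * Cc)) >= ln (4 * Cc)) by (pose proof (Rle_abs (ln (4*Cc))); lra).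
      assert (Hgh : Gf v P K x t <= /2).
      { assert (exp (- (T - L)) <= exp (- ln (4 * Cc))) by (apply expl; lra).
        rewrite (exp_Ropp (ln (4 * Cc))), exp_ln in H by lra.
        assert (2 * Cc * exp (- (T - L)) <= 2 * Cc * / (4 * Cc)) by (apply Rmult_le_compat_l; lra).
        replace (2 * Cc * / (4 * Cc)) with (/2) in H0 by (field; lra). lra. }
      assert (Ha : /2 <= a v k) by (unfold a; lra).
      assert (Hq := LB0' (x - k) t ltac:(lra) ltac:(lra)).
      rewrite minus_INR in Hq by lia. simpl INR in Hq. fold J L in Hq.
      set (E := (x - k) / (J - 1) + (J - 1 + 1) / 2 * L) in *.
      assert (Hq0 : 0 <= Qf P (x - k) t) by (apply (Q_bounds v P K Hs); lra).
      assert (Hch : A0 * exp (- E) <= 4 * Cc * exp (- (T - L))).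
      { assert (/2 * Qf P (x - k) t <= a v k * Qf P (x - k) t) by (apply Rmult_le_compat_r; lra). lra. }
      set (lam := ln (A0 / (4 * Cc))) in *.
      assert (HE : lam - E <= - (T - L)).
      { apply expl_inv.
        replace (exp (lam - E)) with (A0 / (4 * Cc) * exp (- E))
          by (unfold lam; replace (ln (A0 / (4 * Cc)) - E) with (ln (A0 / (4 * Cc)) + - E) by ring;
              rewrite exp_plus, exp_ln; [reflexivity| apply Rdiv_lt_0_compat; lra]).
        apply (Rmult_le_reg_l (4 * Cc)); [lra|].
        replace (4 * Cc * (A0 / (4 * Cc) * exp (- E))) with (A0 * exp (- E)) by (field; lra). lra. }
      set (Z := T - L - J / 2 * L).
      assert (S1 : x * (1 / J - rho / 2) - x * (((N + 2) / 2 + 1 + J / 2) * e) <= Z).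
      { unfold Z, T. rewrite HL.
        assert (r * x <= (rho + e) * x) by (apply Rmult_le_compat_r; lra).
        assert (Hid : x * f - (1 + J/2) * (rho * x) = x * (1 / J - rho / 2)) by (unfold f; field; lra).
        assert ((1 + J/2) * (r * x) <= (1 + J/2) * ((rho + e) * x)) by (apply Rmult_le_compat_l; lra).
        nra. }
      assert (S2 : (J - 1) * (Z + lam) <= x - k).
      { assert (Z + lam <= (x - k) / (J - 1)).
        { unfold Z. unfold E in HE. replace (J - 1 + 1) with J in HE by ring. lra. }
        apply (Rmult_le_compat_l (J - 1)) in H; [|lra].
        replace ((J - 1) * ((x - k) / (J - 1))) with (x - k) in H by (field; lra). exact H. }
      assert (S3 : (J - 1) * (x * (1 / J - rho / 2)) - (J - 1) * (x * (((N + 2) / 2 + 1 + J / 2) * e)) <= (J - 1) * Z).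
      { apply (Rmult_le_compat_l (J - 1)) in S1; lra. }
      assert (S4 : (J - 1) * (x * (1 / J - rho / 2)) = x - x * kap) by (unfold kap; field; lra).
      assert (S5 : (J - 1) * (x * (((N + 2) / 2 + 1 + J / 2) * e)) <= x * (M * e)).
      { assert ((J - 1) * ((N + 2) / 2 + 1 + J / 2) <= M) by (unfold M; nra).
        assert (0 <= x * e) by (apply Rmult_le_pos; lra).
        replace ((J - 1) * (x * (((N + 2) / 2 + 1 + J / 2) * e))) with (((J - 1) * ((N + 2) / 2 + 1 + J / 2)) * (x * e)) by ring.
        replace (x * (M * e)) with (M * (x * e)) by ring. apply Rmult_le_compat_r; lra. }
      assert (S6 : - ((J - 1) * lam) <= cst v j A1 A0 C' C2).
      { pose proof (Rle_abs (- lam)). rewrite Rabs_Ropp in H. fold J in Hc4.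
        assert ((J - 1) * (- lam) <= (J - 1) * Rabs lam) by (apply Rmult_le_compat_l; lra).
        assert ((J - 1) * Rabs lam <= J * Rabs lam) by (apply Rmult_le_compat_r; [apply Rabs_pos|lra]).
        lra. }
      lra.
Qed.

End Est.


Theorem theorem2 (v : R) (P K : R -> R -> R) (xt : R -> R) (rho : R) (j : nat) :
  0 < v <= 1 ->
  bomber_solution v P K ->
  (exists t0, 0 < t0 /\ forall t, 0 < t < t0 -> 0 < xt t) ->
  0 < rho ->
  filterlim (fun t => Rabs (ln t) / xt t) (at_right 0) (locally rho) ->
  (1 <= j)%nat ->
  2 / (INR (j + 1) * INR j) <= rho ->
  (j = 1%nat \/ rho < 2 / (INR j * INR (j - 1))) ->
  filterlim (fun t => K (xt t) t / xt t) (at_right 0)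
    (locally (1 / INR j + rho * (INR j - 1) / 2)) /\
  filterlim (fun t => Rabs (ln (1 - Hfun v P K (xt t) t)) / xt t) (at_right 0)
    (locally (1 / INR j + rho * (INR j - 1) / 2)) /\
  filterlim (fun t => Rabs (ln (1 - P (xt t) t)) / xt t) (at_right 0)
    (locally (1 / INR j + rho * (INR j + 1) / 2)).
Proof.
  intros Hv Hs [t0 [Ht0 Hxp]] Hrho Hlim Hj Hlo Hhi.
  assert (Hd := disc j rho Hj Hlo Hhi).
  set (J := INR j) in *.
  assert (HJ : 1 <= J) by (unfold J; change 1 with (INR 1); apply le_INR; lia).
  set (f := 1 / J + (J + 1) / 2 * rho).
  set (kap := 1 / J + (J - 1) / 2 * rho).
  assert (Hkp : 0 < kap).
  { unfold kap. assert (0 < 1 / J) by (unfold Rdiv; rewrite Rmult_1_l; apply Rinv_0_lt_compat; lra).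
    assert (0 <= (J - 1) / 2 * rho) by (apply Rmult_le_pos; lra). lra. }
  assert (Hf : 0 < f) by (unfold f, kap in *; nra).
  destruct (nfloor_ex (2 * f / rho)) as [n0 [_ Hn0]].
  { apply Rdiv_le_0_compat; lra. }
  set (n := S n0). assert (Hn : 2 * f <= INR n * rho).
  { unfold n. rewrite S_INR. assert (2 * f / rho * rho = 2 * f) by (field; lra).
    assert (2 * f / rho * rho <= (INR n0 + 1) * rho) by (apply Rmult_le_compat_r; lra). lra. }
  destruct (LB_all v P K Hv Hs (j - 1)) as [A1 [HA1 LB1]].
  replace (S (j - 1)) with j in LB1 by lia.
  assert (HA0 : exists A0, 0 < A0 /\ ((j - 1)%nat = 0%nat \/ LBprop P (j - 1) A0)).
  { destruct (Nat.eq_dec (j - 1) 0) as [E|E]. exists 1. split; auto; lra.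
    destruct (LB_all v P K Hv Hs (j - 2)) as [A0 [HA0 LB0]]. exists A0. split; auto. right.
    replace (S (j - 2)) with (j - 1)%nat in LB0 by lia. auto. }
  destruct HA0 as [A0 [HA0 LB0]].
  destruct (UB_all v P K Hv Hs n) as [C' [HC' UB1]].
  destruct (UB_all v P K Hv Hs (S n)) as [C2 [HC2 UB2]].
  set (c := cst v j A1 A0 C' C2).
  assert (Hc : 0 <= c) by apply cst_pos.
  set (N := INR n). assert (HN : 0 <= N) by apply pos_INR.
  set (M := (J + 1) * ((N + 2) / 2 + 2 + J)).
  assert (HM : 0 < M) by (unfold M; nra).
  assert (Main : forall eps, 0 < eps -> exists delta, 0 < delta /\ forall t, 0 < t < delta ->
     Rabs (K (xt t) t / xt t - kap) < eps /\
     Rabs (Rabs (ln (1 - Hfun v P K (xt t) t)) / xt t - kap) < eps /\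
     Rabs (Rabs (ln (1 - P (xt t) t)) / xt t - f) < eps).
  { intros eps Heps.
    set (eta := Rmin (rho / 2) (Rmin (kap / 2 / ((N + 2) / 2 + 1)) (eps / 2 / (M + 1)))).
    assert (Heta : 0 < eta).
    { unfold eta. apply Rmin_glb_lt; [lra|]. apply Rmin_glb_lt; apply Rdiv_lt_0_compat; lra. }
    destruct (lim_to_eps _ _ Hlim eta Heta) as [d1 [Hd1 Hlim1]].
    set (X0 := 2 * c / eps + 2 * c / kap + 1).
    assert (HX0 : 2 * c / eps < X0 /\ 2 * c / kap < X0).
    { assert (0 <= 2 * c / eps) by (apply Rdiv_le_0_compat; lra).
      assert (0 <= 2 * c / kap) by (apply Rdiv_le_0_compat; lra). unfold X0; lra. }
    exists (Rmin t0 (Rmin (/4) (Rmin d1 (exp (- (2 * rho * X0)))))).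
    split.
    { apply Rmin_glb_lt; auto. apply Rmin_glb_lt; [lra|]. apply Rmin_glb_lt; auto. apply exp_pos. }
    intros t Ht.
    assert (Ht0' : t < t0) by (eapply Rlt_le_trans; [apply Ht|apply Rmin_l]).
    assert (Ht4 : t < /4).
    { eapply Rlt_le_trans; [apply Ht|]. eapply Rle_trans; [apply Rmin_r|apply Rmin_l]. }
    assert (Htd : t < d1).
    { eapply Rlt_le_trans; [apply Ht|]. eapply Rle_trans; [apply Rmin_r|].
      eapply Rle_trans; [apply Rmin_r|apply Rmin_l]. }
    assert (Hte : t < exp (- (2 * rho * X0))).
    { eapply Rlt_le_trans; [apply Ht|]. eapply Rle_trans; [apply Rmin_r|].
      eapply Rle_trans; [apply Rmin_r|apply Rmin_r]. }
    set (x := xt t). assert (Hx : 0 < x) by (apply Hxp; lra).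
    assert (HL : 0 < - ln t) by (apply L_pos; lra).
    assert (Habs : Rabs (ln t) = - ln t) by (rewrite Rabs_left; lra).
    specialize (Hlim1 t ltac:(lra)). simpl in Hlim1. fold x in Hlim1. rewrite Habs in Hlim1.
    set (e := Rabs (- ln t / x - rho)) in *.
    assert (He1 : e <= rho / 2).
    { assert (eta <= rho / 2) by apply Rmin_l. lra. }
    assert (He2 : ((N + 2) / 2 + 1) * e <= kap / 2).
    { assert (eta <= kap / 2 / ((N + 2) / 2 + 1)) by (eapply Rle_trans; [apply Rmin_r|apply Rmin_l]).
      assert (e <= kap / 2 / ((N + 2) / 2 + 1)) by lra.
      apply (Rmult_le_compat_l ((N + 2) / 2 + 1)) in H0; [|lra].
      replace (((N + 2) / 2 + 1) * (kap / 2 / ((N + 2) / 2 + 1))) with (kap / 2) in H0 by (field; lra). lra. }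
    assert (He0 : 0 <= e) by apply Rabs_pos.
    assert (HE : M * e < eps / 2).
    { assert (eta <= eps / 2 / (M + 1)) by (eapply Rle_trans; [apply Rmin_r|apply Rmin_r]).
      assert ((M + 1) * e < (M + 1) * (eps / 2 / (M + 1))) by (apply Rmult_lt_compat_l; lra).
      replace ((M + 1) * (eps / 2 / (M + 1))) with (eps / 2) in H0 by (field; lra). nra. }
    assert (HxX : X0 < x).
    { set (r := - ln t / x) in *.
      assert (Hr : r <= 3 / 2 * rho) by (destruct (abs_bt r rho e (Rle_refl _)); lra).
      assert (HLr : - ln t = r * x) by (unfold r; field; lra).
      assert (2 * rho * X0 < - ln t).
      { assert (ln t < ln (exp (- (2 * rho * X0)))) by (apply ln_increasing; lra).
        rewrite ln_exp in H. lra. }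
      destruct (Rle_or_lt x X0) as [Hle|]; auto.
      assert (r * x <= 3 / 2 * rho * X0).
      { apply Rle_trans with (3 / 2 * rho * x). apply Rmult_le_compat_r; lra.
        apply Rmult_le_compat_l; lra. }
      assert (0 <= rho * X0) by (apply Rmult_le_pos; lra). lra. }
    assert (Hcx1 : c < x * eps / 2).
    { destruct HX0 as [H1 _]. assert (2 * c / eps * eps = 2 * c) by (field; lra).
      assert (2 * c / eps * eps < x * eps) by (apply Rmult_lt_compat_r; lra). lra. }
    assert (Hcx2 : c <= x * (kap / 2)).
    { destruct HX0 as [_ H1]. assert (2 * c / kap * kap = 2 * c) by (field; lra).
      assert (2 * c / kap * kap < x * kap) by (apply Rmult_lt_compat_r; lra). lra. }
    assert (Ht' : 0 < t < /4) by lra.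
    assert (He' : Rabs (- ln t / x - rho) <= e) by (unfold e; lra).
    pose proof (est_P v P K j n rho A1 A0 C' C2 Hv Hs Hj Hrho Hd HA1 LB1 HA0 LB0 HC' UB1 HC2 UB2 Hn x t e Hx Ht' He' He1) as EP.
    pose proof (est_H v P K j n rho A1 A0 C' C2 Hv Hs Hj Hrho Hd HA1 LB1 HA0 LB0 HC' UB1 HC2 UB2 Hn x t e Hx Ht' He' He1 He2) as EH.
    pose proof (est_K v P K j n rho A1 A0 C' C2 Hv Hs Hj Hrho Hd HA1 LB1 HA0 LB0 HC' UB1 HC2 UB2 Hn x t e Hx Ht' He' He1 He2 Hcx2) as EK.
    simpl in EP, EH, EK. fold J N f kap M c in EP, EH, EK.
    split; [|split].
    - apply (fin_arith _ x kap (M * e) c eps); try tauto; lra.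
    - apply (fin_arith _ x kap (M * e) c eps); try tauto; lra.
    - apply (fin_arith _ x f (M * e) c eps); try tauto; lra. }
  replace (1 / J + rho * (J - 1) / 2) with kap by (unfold kap; field; lra).
  replace (1 / J + rho * (J + 1) / 2) with f by (unfold f; field; lra).
  split; [|split]; apply eps_to_lim; intros eps Heps; destruct (Main eps Heps) as [d [Hd0 Hd1]];
    exists d; split; auto; intros t Ht; apply Hd1; auto.
Qed.
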